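(* Let $N\geq 1$ be an integer. Then for all $|t|<\pi/2$, \[ t\sec^2 t-\tan t=\sum_{j=1}^{N-1}\frac{2j\cdot 2^{2j+2}(2^{2j+2}-1)|B_{2j+2}|}{(2j+2)!}t^{2j+1}+\kappa_N(t), \] where \[ \kappa_N(t)=\frac{N\cdot 2^{2N+4}t^{2N+1}}{\pi^{2N}}\sum_{k=1}^{\infty}\frac{1}{(2k-1)^{2N}\bigl(\pi^2(2k-1)^2-4t^2\bigr)}+\frac{2^{2N+6}t^{2N+3}}{\pi^{2N}}\sum_{k=1}^{\infty}\frac{1}{(2k-1)^{2N}\bigl(\pi^2(2k-1)^2-4t^2\bigr)^2}. \]
   Context: The Bernoulli numbers $B_n$ are defined by $\frac{t}{e^t-1}=\sum_{n=0}^\infty B_n\frac{t^n}{n!}$ for $|t|<2\pi$. An empty sum is understood to be zero. *)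

(* Defs.v *)
From Stdlib Require Import Reals Lra Lia Arith Factorial List.
Open Scope R_scope.

(* B is the sequence of Bernoulli numbers, characterised as in the paper by
   t/(e^t - 1) = sum_{n>=0} B_n t^n / n!   for 0 < |t| < 2 pi
   (at t = 0 the left side is understood as its limit 1; coefficients of a
   power series are determined by its values on a punctured disc). *)
Definition is_bernoulli (B : nat -> R) : Prop :=
  forall t : R, 0 < Rabs t < 2 * PI ->
    infinite_sum (fun n => B n * t ^ n / INR (fact n)) (t / (exp t - 1)).

Definition sum_1_to (m : nat) (f : nat -> R) : R :=
  fold_right Rplus 0 (map f (seq 1 m)).

(* Main.v *)
Require Import Defs.
From Stdlib Require Import Reals Lra Lia Arith Factorial List ZArith.
From Coquelicot Require Import Coquelicot.
Open Scope R_scope.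

Fixpoint ssum (f : nat -> R) (n : nat) : R :=
  match n with O => 0 | S n => ssum f n + f n end.

Lemma ssum_ext f g n : (forall k, (k < n)%nat -> f k = g k) -> ssum f n = ssum g n.
Proof. induction n; simpl; intros H; [lra|]. rewrite IHn by (intros; apply H; lia). rewrite H by lia. lra. Qed.

Lemma ssum_plus f g n : ssum (fun k => f k + g k) n = ssum f n + ssum g n.
Proof. induction n; simpl; lra. Qed.

Lemma ssum_scal c f n : ssum (fun k => c * f k) n = c * ssum f n.
Proof. induction n; simpl; [lra|]. rewrite IHn; lra. Qed.

Lemma ssum_opp f n : ssum (fun k => - f k) n = - ssum f n.
Proof. induction n; simpl; [lra|]. rewrite IHn; lra. Qed.

Lemma ssum_add f n m : ssum f (n + m) = ssum f n + ssum (fun k => f (n + k)%nat) m.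
Proof. induction m; simpl. rewrite Nat.add_0_r; lra. rewrite Nat.add_succ_r; simpl; rewrite IHm; lra. Qed.

Lemma ssum_shift f n : ssum f (S n) = f O + ssum (fun k => f (S k)) n.
Proof. induction n; simpl in *; [lra|]. rewrite IHn. lra. Qed.

Lemma ssum_rev f n : ssum f n = ssum (fun k => f (n - 1 - k)%nat) n.
Proof.
  induction n; [simpl; lra|].
  rewrite (ssum_shift (fun k => f (S n - 1 - k)%nat)). replace (S n - 1 - 0)%nat with n by lia.
  simpl ssum at 1. rewrite IHn. rewrite Rplus_comm. f_equal. apply ssum_ext. intros k Hk. f_equal. lia.
Qed.

Lemma ssum_le f g n : (forall k, (k < n)%nat -> f k <= g k) -> ssum f n <= ssum g n.
Proof. induction n; simpl; intros H; [lra|]. specialize (IHn (fun k Hk => H k ltac:(lia))). specialize (H n ltac:(lia)). lra. Qed.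

Lemma ssum_abs f n : Rabs (ssum f n) <= ssum (fun k => Rabs (f k)) n.
Proof. induction n; simpl. rewrite Rabs_R0; lra. eapply Rle_trans. apply Rabs_triang. lra. Qed.

Lemma ssum_nonneg f n : (forall k, (k < n)%nat -> 0 <= f k) -> 0 <= ssum f n.
Proof. induction n; simpl; intros H; [lra|]. specialize (IHn (fun k Hk => H k ltac:(lia))). specialize (H n ltac:(lia)). lra. Qed.

Lemma ssum_sum_f f n : ssum f (S n) = sum_f_R0 f n.
Proof. induction n; simpl in *; [lra|]. rewrite <- IHn. simpl. lra. Qed.

Lemma ssum_mono f n m : (forall k, 0 <= f k) -> (n <= m)%nat -> ssum f n <= ssum f m.
Proof.
  intros H Hnm. replace m with (n + (m - n))%nat by lia. rewrite ssum_add.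
  assert (0 <= ssum (fun k => f (n + k)%nat) (m - n)) by (apply ssum_nonneg; auto). lra.
Qed.

Lemma ssum_const c j : ssum (fun _ => c) j = INR j * c.
Proof. induction j; simpl; [lra|]. rewrite IHj. destruct j; simpl; lra. Qed.

Lemma ssum_le_inf f l : (forall k, 0 <= f k) -> infinite_sum f l -> forall n, ssum f n <= l.
Proof.
  intros Hf Hl n. destruct n. simpl. 
  - assert (H := growing_ineq (sum_f_R0 f) l). 
    assert (Un_growing (sum_f_R0 f)) by (intro k; simpl; specialize (Hf (S k)); lra).
    specialize (H H0 Hl 0%nat). simpl in H. specialize (Hf 0%nat). lra.
  - rewrite ssum_sum_f. apply growing_ineq; auto. intro k; simpl; specialize (Hf (S k)); lra.
Qed.

Lemma finite_uniform (a : nat -> nat -> R) (b : nat -> R) K eps :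
  (forall k, Un_cv (fun m => a m k) (b k)) -> eps > 0 ->
  exists m1, forall m k, (m1 <= m)%nat -> (k < K)%nat -> Rabs (a m k - b k) < eps.
Proof.
  intros Hc He. induction K.
  - exists O. intros; lia.
  - destruct IHK as [m1 Hm1]. destruct (Hc K eps He) as [m2 Hm2].
    exists (max m1 m2). intros m k Hm Hk.
    destruct (Nat.eq_dec k K). subst. unfold Rdist in Hm2. apply Hm2. lia.
    apply Hm1; lia.
Qed.

Lemma tannery (a : nat -> nat -> R) (b M : nat -> R) (L : nat -> nat) (C SM : R) :
  (forall k, Un_cv (fun m => a m k) (b k)) ->
  (forall m k, (k < L m)%nat -> Rabs (a m k) <= M k) ->
  (forall k, 0 <= M k) -> infinite_sum M SM ->
  (forall K, exists m0, forall m, (m0 <= m)%nat -> (K <= L m)%nat) ->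
  (forall m, ssum (a m) (L m) = C) ->
  infinite_sum b C.
Proof.
  intros Hc Hb HM0 HM HL HC.
  assert (Hbk : forall k, Rabs (b k) <= M k).
  { intros k. apply Rnot_lt_le. intro Hlt.
    set (e := Rabs (b k) - M k).
    destruct (Hc k e ltac:(unfold e; lra)) as [m1 Hm1].
    destruct (HL (S k)) as [m0 Hm0].
    specialize (Hm1 (max m1 m0) ltac:(lia)). specialize (Hm0 (max m1 m0) ltac:(lia)).
    specialize (Hb (max m1 m0) k ltac:(lia)). unfold Rdist in Hm1.
    assert (Rabs (b k) <= Rabs (a (max m1 m0) k) + Rabs (a (max m1 m0) k - b k)).
    { replace (b k) with (a (max m1 m0) k - (a (max m1 m0) k - b k)) at 1 by ring.
      eapply Rle_trans. apply Rabs_triang. rewrite Rabs_Ropp. lra. }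
    unfold e in *. lra. }
  intros eps Heps.
  destruct (HM (eps/4) ltac:(lra)) as [K0 HK0].
  set (K := S K0).
  assert (Htail : forall n, (K <= n)%nat -> ssum (fun i => M (K + i)%nat) (n - K) <= eps/4).
  { intros n Hn.
    assert (Hle := ssum_le_inf M SM HM0 HM n).
    assert (Hs := ssum_add M K (n - K)). replace (K + (n - K))%nat with n in Hs by lia.
    specialize (HK0 K0 ltac:(lia)). unfold Rdist in HK0. rewrite <- ssum_sum_f in HK0.
    fold K in HK0. apply Rabs_def2 in HK0. lra. }
  exists K. intros n Hn. unfold Rdist.
  rewrite <- ssum_sum_f.
  destruct (finite_uniform a b K (eps / (4 * INR (S K))) Hc) as [m1 Hm1].
  { apply Rdiv_lt_0_compat; [lra|]. apply Rmult_lt_0_compat; [lra|]. apply lt_0_INR; lia. }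
  destruct (HL (S (S n))) as [m0 Hm0].
  set (m := max m1 m0).
  specialize (Hm0 m ltac:(unfold m; lia)).
  rewrite <- (HC m).
  assert (E1 := ssum_add b K (S n - K)). replace (K + (S n - K))%nat with (S n) in E1 by lia.
  assert (E2 := ssum_add (a m) K (L m - K)). replace (K + (L m - K))%nat with (L m) in E2 by lia.
  rewrite E1, E2.
  assert (A1 : Rabs (ssum b K - ssum (a m) K) <= eps/4).
  { replace (ssum b K - ssum (a m) K) with (ssum (fun k => b k - a m k) K)
      by (unfold Rminus; rewrite <- (ssum_opp (a m)), <- ssum_plus; apply ssum_ext; intros; ring).
    eapply Rle_trans. apply ssum_abs.
    eapply Rle_trans. apply (ssum_le _ (fun _ => eps / (4 * INR (S K)))).
    { intros k Hk. rewrite Rabs_minus_sym. left. apply Hm1; [unfold m; lia| lia]. }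
    rewrite ssum_const. rewrite S_INR.
    assert (0 <= INR K) by apply pos_INR.
    apply Rmult_le_reg_r with (4 * (INR K + 1)); [lra|].
    field_simplify; [|lra]. nra. }
  assert (A2 : Rabs (ssum (fun k => b (K + k)%nat) (S n - K)) <= eps/4).
  { eapply Rle_trans. apply ssum_abs. eapply Rle_trans.
    apply (ssum_le _ (fun i => M (K + i)%nat)). intros; apply Hbk.
    apply (Htail (S n)); lia. }
  assert (A3 : Rabs (ssum (fun k => a m (K + k)%nat) (L m - K)) <= eps/4).
  { eapply Rle_trans. apply ssum_abs. eapply Rle_trans.
    apply (ssum_le _ (fun i => M (K + i)%nat)). intros; apply Hb; lia.
    apply (Htail (L m)); lia. }
  replace (ssum b K + ssum (fun k => b (K + k)%nat) (S n - K) -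
     (ssum (a m) K + ssum (fun k => a m (K + k)%nat) (L m - K)))
   with ((ssum b K - ssum (a m) K) + ssum (fun k => b (K + k)%nat) (S n - K)
          - ssum (fun k => a m (K + k)%nat) (L m - K)) by ring.
  eapply Rle_lt_trans. apply Rabs_triang. rewrite Rabs_Ropp.
  eapply Rle_lt_trans. apply Rplus_le_compat_r. apply Rabs_triang. lra.
Qed.

Lemma sin_plus_PI2 y : sin (y + PI/2) = cos y.
Proof. rewrite sin_plus, sin_PI2, cos_PI2. ring. Qed.
Lemma cos_plus_PI2 y : cos (y + PI/2) = - sin y.
Proof. rewrite cos_plus, sin_PI2, cos_PI2. ring. Qed.

Lemma pow2_pos m : 0 < 2 ^ m.
Proof. apply pow_lt; lra. Qed.

Lemma sin_shift_nz x j m : sin x <> 0 -> sin ((x + INR j * PI) / 2 ^ m) <> 0.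
Proof.
  intros Hx H. apply sin_eq_0_0 in H. destruct H as [k Hk]. apply Hx.
  apply sin_eq_0_1. exists (k * 2 ^ Z.of_nat m - Z.of_nat j)%Z.
  rewrite minus_IZR, mult_IZR, <- pow_IZR, <- INR_IZR_INZ.
  assert (H2 := pow2_pos m).
  apply (Rmult_eq_compat_r (2 ^ m)) in Hk. field_simplify in Hk; [|lra].
  replace (IZR 2) with 2 by reflexivity. lra.
Qed.

Lemma dup_iter (F : R -> R) lam : lam <> 0 ->
  (forall y, sin (2 * y) <> 0 -> F y + F (y + PI/2) = lam * F (2 * y)) ->
  forall m x, sin x <> 0 ->
  F x = / lam ^ m * ssum (fun j => F ((x + INR j * PI) / 2 ^ m)) (2 ^ m).
Proof.
  intros Hl HF. induction m; intros x Hx.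
  - simpl. replace ((x + 0 * PI) / 1) with x by field. field.
  - rewrite (IHm x Hx).
    assert (E : forall j, F ((x + INR j * PI) / 2 ^ m) =
       / lam * (F ((x + INR j * PI) / 2 ^ S m) + F ((x + INR (2^m + j) * PI) / 2 ^ S m))).
    { intros j. assert (H2 := pow2_pos m).
      assert (Hs := sin_shift_nz x j m Hx).
      replace ((x + INR j * PI) / 2 ^ m) with (2 * ((x + INR j * PI) / 2 ^ S m)) in Hs |- *
        by (simpl; field; lra).
      replace ((x + INR (2 ^ m + j) * PI) / 2 ^ S m) with ((x + INR j * PI) / 2 ^ S m + PI / 2).
      rewrite HF by auto. field; auto.
      rewrite plus_INR, pow_INR. replace (INR 2) with 2 by reflexivity. simpl. field. lra. }
    rewrite (ssum_ext _ _ _ (fun j _ => E j)).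
    rewrite ssum_scal, ssum_plus.
    replace (2 ^ S m)%nat with (2 ^ m + 2 ^ m)%nat by (simpl; lia).
    rewrite ssum_add. simpl pow. field. split; auto. apply pow_nonzero; auto.
Qed.

Definition cot y := cos y / sin y.
Definition isin2 y := / (sin y) ^ 2.

Lemma cot_dup y : sin (2 * y) <> 0 -> cot y + cot (y + PI/2) = 2 * cot (2 * y).
Proof.
  intros H. rewrite sin_2a in H. unfold cot. rewrite sin_plus_PI2, cos_plus_PI2, sin_2a.
  rewrite cos_2a.
  assert (sin y <> 0) by (intro E; apply H; rewrite E; ring).
  assert (cos y <> 0) by (intro E; apply H; rewrite E; ring).
  field. auto.
Qed.

Lemma isin2_dup y : sin (2 * y) <> 0 -> isin2 y + isin2 (y + PI/2) = 4 * isin2 (2 * y).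
Proof.
  intros H. rewrite sin_2a in H. unfold isin2. rewrite sin_plus_PI2, sin_2a.
  assert (sin y <> 0) by (intro E; apply H; rewrite E; ring).
  assert (cos y <> 0) by (intro E; apply H; rewrite E; ring).
  assert (Hsc : sin y ^ 2 + cos y ^ 2 = 1) by (rewrite <- (sin2_cos2 y); unfold Rsqr; ring).
  transitivity ((sin y ^ 2 + cos y ^ 2) / (sin y ^ 2 * cos y ^ 2)). field; auto.
  rewrite Hsc. field; auto.
Qed.

Lemma cot_per z : cot (z + PI) = cot z.
Proof. unfold cot. rewrite neg_sin, neg_cos. unfold Rdiv. rewrite Rinv_opp. ring. Qed.
Lemma isin2_per z : isin2 (z + PI) = isin2 z.
Proof. unfold isin2. rewrite neg_sin. f_equal. ring. Qed.

Lemma symm (F : R -> R) (Fper : forall z, F (z + PI) = F z) m t :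
  ssum (fun j => F ((t + PI/2 + INR j * PI) / 2 ^ S m)) (2 ^ S m) =
  ssum (fun k => F (t / 2 ^ S m + (2 * INR k + 1) * PI / 2 ^ S (S m))
               + F (t / 2 ^ S m - (2 * INR k + 1) * PI / 2 ^ S (S m))) (2 ^ m).
Proof.
  replace (2 ^ S m)%nat with (2 ^ m + 2 ^ m)%nat by (simpl; lia).
  rewrite ssum_add, ssum_plus. assert (H2 := pow2_pos m). f_equal.
  - apply ssum_ext. intros k _. f_equal. simpl. field. lra.
  - rewrite ssum_rev. apply ssum_ext. intros k Hk.
    rewrite <- (Fper (t / 2 ^ S m - (2 * INR k + 1) * PI / 2 ^ S (S m))). f_equal.
    rewrite plus_INR, minus_INR by lia. rewrite minus_INR by lia. rewrite pow_INR. simpl.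
    replace (1+1) with 2 by ring. field. lra.
Qed.

Definition sinc z := if Req_EM_T z 0 then 1 else sin z / z.

Lemma sinc_spec z : sin z = sinc z * z.
Proof. unfold sinc. destruct (Req_EM_T z 0). subst; rewrite sin_0; ring. field; auto. Qed.

Lemma sinc_even z : sinc (- z) = sinc z.
Proof.
  unfold sinc. destruct (Req_EM_T (-z) 0); destruct (Req_EM_T z 0); try lra.
  rewrite sin_neg. field; auto.
Qed.

Lemma sinc_bnd_pos z : 0 < z <= 2 -> 1 - z^2/6 <= sinc z <= 1.
Proof.
  intros Hz. assert (HP := PI2_1).
  destruct (sin_bound z 0 ltac:(lra) ltac:(lra)) as [H1 H2].
  unfold sin_approx, sin_term in H1, H2. simpl in H1, H2.
  unfold sinc. destruct (Req_EM_T z 0); [lra|].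
  split.
  - apply Rmult_le_reg_r with z; [lra|]. unfold Rdiv. rewrite Rmult_assoc, Rinv_l by lra.
    field_simplify in H1. field_simplify. lra.
  - apply Rmult_le_reg_r with z; [lra|]. unfold Rdiv. rewrite Rmult_assoc, Rinv_l by lra.
    assert (0 < z^3) by (apply pow_lt; lra).
    assert (z^3 * z^2 <= z^3 * 20) by (apply Rmult_le_compat_l; nra).
    field_simplify in H2. replace (z^5) with (z^3*z^2) in H2 by ring. lra.
Qed.

Lemma sinc_bnd z : Rabs z <= 2 -> 1 - z^2/6 <= sinc z <= 1.
Proof.
  intros Hz. destruct (Rtotal_order z 0) as [H|[H|H]].
  - rewrite <- sinc_even. replace (z^2) with ((-z)^2) by ring. apply sinc_bnd_pos.
    rewrite Rabs_left in Hz; lra.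
  - subst. unfold sinc. destruct (Req_EM_T 0 0); [|lra]. simpl; lra.
  - apply sinc_bnd_pos. rewrite Rabs_right in Hz; lra.
Qed.

Lemma sinc_lo z : Rabs z <= PI / 2 -> 1/3 <= sinc z.
Proof.
  intros Hz. assert (HP := PI_4).
  assert (Rabs z <= 2) by lra. destruct (sinc_bnd z H).
  assert (z^2 <= 4). { unfold Rabs in H; destruct Rcase_abs; nra. }
  lra.
Qed.

Lemma sinc_cv (zs : nat -> R) : is_lim_seq zs 0 -> is_lim_seq (fun m => sinc (zs m)) 1.
Proof.
  intros Hz. assert (Hz' := proj1 (is_lim_seq_Reals _ _) Hz).
  apply (is_lim_seq_le_le_loc (fun m => 1 - zs m * zs m / 6) _ (fun _ => 1)).
  - destruct (Hz' 1 Rlt_0_1) as [N HN]. exists N. intros n Hn.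
    replace (zs n * zs n) with (zs n ^ 2) by ring.
    apply sinc_bnd. specialize (HN n Hn). unfold R_dist in HN. rewrite Rminus_0_r in HN. lra.
  - replace (Finite 1) with (Finite (1 - 0 * 0/6)) by (f_equal; field).
    apply is_lim_seq_minus'. apply is_lim_seq_const.
    apply is_lim_seq_div'. apply is_lim_seq_mult'; auto. apply is_lim_seq_const. lra.
  - apply is_lim_seq_const.
Qed.

Lemma ex_inf_sum_bounded (f : nat -> R) M : (forall k, 0 <= f k) -> (forall n, sum_f_R0 f n <= M) ->
  exists l, infinite_sum f l.
Proof.
  intros H0 HM.
  assert (Hex : ex_finite_lim_seq (sum_f_R0 f)).
  { apply ex_finite_lim_seq_incr with M; auto. intro n; simpl. specialize (H0 (S n)). lra. }
  destruct Hex as [l Hl]. exists l. apply is_lim_seq_Reals in Hl. exact Hl.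
Qed.

Lemma inv_sq_sum : exists l, infinite_sum (fun k => / (INR k + 1)^2) l.
Proof.
  apply ex_inf_sum_bounded with 2.
  - intros; apply Rlt_le, Rinv_0_lt_compat, pow_lt. assert (H := pos_INR k); lra.
  - assert (forall n, sum_f_R0 (fun k => / (INR k + 1)^2) n <= 2 - / (INR n + 1)).
    { induction n. simpl. lra. cbn [sum_f_R0]. rewrite S_INR.
      assert (H := pos_INR n).
      assert (/ (INR n + 1 + 1) ^ 2 <= / (INR n + 1) - / (INR n + 1 + 1)).
      { replace (/ (INR n + 1) - / (INR n + 1 + 1)) with (/ ((INR n + 1) * (INR n + 1 + 1))) by (field; lra).
        apply Rinv_le_contravar. nra. simpl. nra. }
      lra. }
    intros n. specialize (H n). assert (0 < / (INR n + 1)) by (apply Rinv_0_lt_compat; assert (H1 := pos_INR n); lra). lra.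
Qed.

Lemma sum_comp (A : nat -> R) (c : R) : (forall k, 0 <= A k <= c * / (INR k + 1)^2) ->
  exists l, infinite_sum A l.
Proof.
  intros H. destruct inv_sq_sum as [l Hl].
  assert (Hc : {l | Un_cv (fun N => sum_f_R0 (fun k => c * / (INR k + 1)^2) N) l}).
  { exists (c * l). apply is_lim_seq_Reals.
    apply is_lim_seq_ext with (fun N => c * sum_f_R0 (fun k => / (INR k + 1) ^ 2) N).
    intros; rewrite scal_sum; apply sum_eq; intros; ring.
    apply (is_lim_seq_scal_l _ c l). apply is_lim_seq_Reals. exact Hl. }
  destruct (Rseries_CV_comp A _ H Hc) as [l' Hl']. exists l'. exact Hl'.
Qed.

Lemma K_le_pow K : (K < 2 ^ K)%nat.
Proof. induction K; simpl; lia. Qed.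

Lemma L_inf : forall K, exists m0, forall m, (m0 <= m)%nat -> (K <= 2 ^ m)%nat.
Proof.
  intros K. exists K. intros m Hm. apply Nat.le_trans with (2^K)%nat. apply Nat.lt_le_incl, K_le_pow.
  apply Nat.pow_le_mono_r; lia.
Qed.

Definition cc k := (2 * INR k + 1) * PI.

Lemma cc_ge k : PI <= cc k.
Proof. unfold cc. assert (H := pos_INR k). assert (H2 := PI_RGT_0). nra. Qed.

Lemma INR_pow2 m : INR (2 ^ m) = 2 ^ m.
Proof. rewrite pow_INR. replace (INR 2) with 2 by reflexivity. reflexivity. Qed.

Section PF.
Variable t : R.
Hypothesis Ht : Rabs t < PI / 2.

Let X m := 2 ^ S m.
Let u m := t / 2 ^ S m.
Let w m k := (2 * INR k + 1) * PI / 2 ^ S (S m).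

Lemma uw_bounds m k : (k < 2 ^ m)%nat ->
  0 < w m k - u m < PI / 2 /\ 0 < w m k + u m < PI / 2 /\ Rabs (2 * u m) <= PI / 2.
Proof.
  intros Hk. unfold u, w.
  assert (HX := pow2_pos m).
  assert (Hk' : INR k + 1 <= 2 ^ m).
  { rewrite <- INR_pow2. rewrite <- S_INR. apply le_INR. lia. }
  assert (HP := PI_RGT_0).
  assert (Ht' : - (PI/2) < t < PI/2) by (apply Rabs_def2 in Ht; lra).
  simpl pow. repeat split.
  - apply Rlt_Rminus. apply Rmult_lt_reg_r with (2 * (2 * 2^m)); [lra|].
    field_simplify; try lra. assert (H0 := pos_INR k). nra.
  - apply Rmult_lt_reg_r with (2 * (2 * 2^m)); [lra|].
    field_simplify; try lra. nra.
  - apply Rmult_lt_reg_r with (2 * (2 * 2^m)); [lra|].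
    field_simplify; try lra. assert (H0 := pos_INR k). nra.
  - apply Rmult_lt_reg_r with (2 * (2 * 2^m)); [lra|].
    field_simplify; try lra. nra.
  - replace (2 * (t / (2 * 2 ^ m))) with (t / 2^m) by (field; lra).
    unfold Rdiv. rewrite Rabs_mult, Rabs_inv, (Rabs_right (2^m)) by lra.
    assert (1 <= 2^m) by (apply pow_R1_Rle; lra).
    apply Rmult_le_reg_r with (2^m); [lra|]. rewrite Rmult_assoc, Rinv_l by lra. nra.
Qed.

Lemma sin_nz_of a : 0 < Rabs a <= PI / 2 -> sin a <> 0.
Proof.
  intros H. rewrite sinc_spec. assert (H1 := sinc_lo a ltac:(lra)).
  apply Rmult_integral_contrapositive. split. lra. intro E; subst; rewrite Rabs_R0 in H; lra.
Qed.

Definition tterm m k := 8 * t * sinc (2 * u m) / (sinc (w m k + u m) * sinc (w m k - u m) * (cc k ^ 2 - 4 * t ^ 2)).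

Lemma c2_pos k : 0 < cc k ^ 2 - 4 * t ^ 2.
Proof.
  assert (H := cc_ge k). assert (HP := PI_RGT_0).
  assert (t^2 < (PI/2)^2). { unfold Rabs in Ht; destruct Rcase_abs; nra. }
  nra.
Qed.

Lemma tterm_eq m k : (k < 2 ^ m)%nat ->
  - / 2 ^ S m * (cot (u m + w m k) + cot (u m - w m k)) = tterm m k.
Proof.
  intros Hk. destruct (uw_bounds m k Hk) as [H1 [H2 H3]].
  assert (Sa : sin (u m + w m k) <> 0) by (apply sin_nz_of; rewrite Rabs_right; lra).
  assert (Sb : sin (u m - w m k) <> 0) by (apply sin_nz_of; rewrite Rabs_left; lra).
  assert (E : cot (u m + w m k) + cot (u m - w m k) =
     sin (2 * u m) / (sin (u m + w m k) * sin (u m - w m k))).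
  { unfold cot. replace (2 * u m) with ((u m + w m k) + (u m - w m k)) by ring.
    rewrite (sin_plus (u m + w m k) (u m - w m k)). field. auto. }
  rewrite E. clear E.
  rewrite (sinc_spec (2 * u m)), (sinc_spec (u m + w m k)), (sinc_spec (u m - w m k)).
  replace (u m - w m k) with (- (w m k - u m)) by ring. rewrite sinc_even.
  assert (L1 := sinc_lo (w m k + u m) ltac:(rewrite Rabs_right; lra)).
  assert (L2 := sinc_lo (w m k - u m) ltac:(rewrite Rabs_right; lra)).
  assert (C2 := c2_pos k).
  unfold tterm. rewrite (Rplus_comm (u m)).
  unfold u, w, cc in *. simpl pow in *. assert (HX := pow2_pos m).
  assert (A0 := cc_ge k). unfold cc in A0.
  assert (Ht' : - (PI/2) < t < PI/2) by (apply Rabs_def2 in Ht; lra).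
  field. repeat split; try lra.
Qed.


Definition sterm m k := 4 / (sinc (w m k + u m) ^ 2 * (cc k + 2 * t) ^ 2)
                      + 4 / (sinc (w m k - u m) ^ 2 * (cc k - 2 * t) ^ 2).

Lemma sterm_eq m k : (k < 2 ^ m)%nat ->
  / 4 ^ S m * (isin2 (u m + w m k) + isin2 (u m - w m k)) = sterm m k.
Proof.
  intros Hk. destruct (uw_bounds m k Hk) as [H1 [H2 H3]].
  unfold isin2.
  rewrite (sinc_spec (u m + w m k)), (sinc_spec (u m - w m k)).
  replace (u m - w m k) with (- (w m k - u m)) by ring. rewrite sinc_even.
  assert (L1 := sinc_lo (w m k + u m) ltac:(rewrite Rabs_right; lra)).
  assert (L2 := sinc_lo (w m k - u m) ltac:(rewrite Rabs_right; lra)).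
  unfold sterm. rewrite (Rplus_comm (u m)).
  assert (A0 := cc_ge k). unfold cc in *.
  assert (Ht' : - (PI/2) < t < PI/2) by (apply Rabs_def2 in Ht; lra).
  replace (4 ^ S m) with (2 ^ S m * 2 ^ S m) by (rewrite <- Rpow_mult_distr; f_equal; ring).
  unfold u, w in *. simpl pow in *. assert (HX := pow2_pos m).
  field. repeat split; try lra.
Qed.

Lemma tan_as_cot : tan t = - cot (t + PI / 2).
Proof.
  unfold tan, cot. rewrite sin_plus_PI2, cos_plus_PI2.
  assert (cos t <> 0). { assert (Ht' : - (PI/2) < t < PI/2) by (apply Rabs_def2 in Ht; lra).
    apply Rgt_not_eq, cos_gt_0; lra. }
  field. auto.
Qed.

Lemma cos_t_nz : cos t <> 0.
Proof. assert (Ht' : - (PI/2) < t < PI/2) by (apply Rabs_def2 in Ht; lra).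
    apply Rgt_not_eq, cos_gt_0; lra. Qed.

Lemma tan_ssum m : ssum (tterm m) (2 ^ m) = tan t.
Proof.
  rewrite tan_as_cot.
  rewrite (dup_iter cot 2 ltac:(lra) cot_dup (S m) (t + PI/2)) by (rewrite sin_plus_PI2; apply cos_t_nz).
  rewrite (symm cot cot_per m t).
  rewrite <- ssum_scal, <- ssum_opp. apply ssum_ext. intros k Hk. rewrite <- tterm_eq by auto.
  unfold u, w. ring.
Qed.

Lemma sec_ssum m : ssum (sterm m) (2 ^ m) = / cos t ^ 2.
Proof.
  replace (/ cos t ^ 2) with (isin2 (t + PI / 2)) by (unfold isin2; rewrite sin_plus_PI2; reflexivity).
  rewrite (dup_iter isin2 4 ltac:(lra) isin2_dup (S m) (t + PI/2)) by (rewrite sin_plus_PI2; apply cos_t_nz).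
  rewrite (symm isin2 isin2_per m t).
  rewrite <- ssum_scal. apply ssum_ext. intros k Hk. rewrite <- sterm_eq by auto.
  unfold u, w. ring.
Qed.

Lemma lim_half (a : R) : is_lim_seq (fun m => a / 2 ^ m) 0.
Proof. apply is_lim_seq_Reals. apply cv_pow_half. Qed.

Lemma lim_sincs k :
  (is_lim_seq (fun m => sinc (2 * u m)) 1) /\ (is_lim_seq (fun m => sinc (w m k + u m)) 1) /\ (is_lim_seq (fun m => sinc (w m k - u m)) 1).
Proof.
  repeat split; apply sinc_cv.
  - apply is_lim_seq_ext with (fun m => t / 2 ^ m). intros m; unfold u; simpl; field.
    apply Rgt_not_eq, pow2_pos. apply lim_half.
  - apply is_lim_seq_ext with (fun m => ((2 * INR k + 1) * PI / 4 + t / 2) / 2 ^ m).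
    intros m; unfold u, w; simpl; field. apply Rgt_not_eq, pow2_pos. apply lim_half.
  - apply is_lim_seq_ext with (fun m => ((2 * INR k + 1) * PI / 4 - t / 2) / 2 ^ m).
    intros m; unfold u, w; simpl; field. apply Rgt_not_eq, pow2_pos. apply lim_half.
Qed.

Lemma tterm_lim k : Un_cv (fun m => tterm m k) (8 * t / (cc k ^ 2 - 4 * t ^ 2)).
Proof.
  apply is_lim_seq_Reals. destruct (lim_sincs k) as [A [B C]].
  apply is_lim_seq_ext with (fun m => (8 * t / (cc k ^ 2 - 4 * t ^ 2)) * (sinc (2 * u m) / (sinc (w m k + u m) * sinc (w m k - u m)))).
  { intros m. unfold tterm, Rdiv. rewrite !Rinv_mult. ring. }
  assert (C2 := c2_pos k).
  assert (HL : is_lim_seq (fun m => (8 * t / (cc k ^ 2 - 4 * t ^ 2)) * (sinc (2 * u m) / (sinc (w m k + u m) * sinc (w m k - u m))))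
     ((8 * t / (cc k ^ 2 - 4 * t ^ 2)) * (1 / (1 * 1)))).
  { apply is_lim_seq_mult'. apply is_lim_seq_const.
    apply is_lim_seq_div'; auto. apply is_lim_seq_mult'; auto. }
  replace ((8 * t / (cc k ^ 2 - 4 * t ^ 2)) * (1 / (1 * 1))) with (8 * t / (cc k ^ 2 - 4 * t ^ 2)) in HL by (field; lra).
  exact HL.
Qed.

Lemma sterm_lim k : Un_cv (fun m => sterm m k) (4 / (cc k + 2 * t) ^ 2 + 4 / (cc k - 2 * t) ^ 2).
Proof.
  apply is_lim_seq_Reals. destruct (lim_sincs k) as [A [B C]].
  apply is_lim_seq_ext with (fun m => (4 / (cc k + 2 * t) ^ 2) * / (sinc (w m k + u m) * sinc (w m k + u m))
     + (4 / (cc k - 2 * t) ^ 2) * / (sinc (w m k - u m) * sinc (w m k - u m))).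
  { intros m. unfold sterm, Rdiv.
    replace (sinc (w m k + u m) ^ 2) with (sinc (w m k + u m) * sinc (w m k + u m)) by ring.
    replace (sinc (w m k - u m) ^ 2) with (sinc (w m k - u m) * sinc (w m k - u m)) by ring.
    rewrite !Rinv_mult. ring. }
  assert (I1 : is_lim_seq (fun m => / (sinc (w m k + u m) * sinc (w m k + u m))) (/ (1 * 1))).
  { apply (is_lim_seq_inv _ (1 * 1)). apply is_lim_seq_mult'; auto. simpl; intro E; injection E; lra. }
  assert (I2 : is_lim_seq (fun m => / (sinc (w m k - u m) * sinc (w m k - u m))) (/ (1 * 1))).
  { apply (is_lim_seq_inv _ (1 * 1)). apply is_lim_seq_mult'; auto. simpl; intro E; injection E; lra. }
  assert (HL := is_lim_seq_plus' _ _ _ _ (is_lim_seq_mult' _ _ _ _ (is_lim_seq_const (4 / (cc k + 2 * t) ^ 2)) I1)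
                   (is_lim_seq_mult' _ _ _ _ (is_lim_seq_const (4 / (cc k - 2 * t) ^ 2)) I2)).
  rewrite Rmult_1_r, Rinv_1, !Rmult_1_r in HL. exact HL.
Qed.

Lemma tterm_bound m k : (k < 2 ^ m)%nat -> Rabs (tterm m k) <= 72 * Rabs t / (cc k ^ 2 - 4 * t ^ 2).
Proof.
  intros Hk. destruct (uw_bounds m k Hk) as [H1 [H2 H3]].
  assert (L0 := sinc_lo (2 * u m) H3).
  assert (U0 : sinc (2 * u m) <= 1) by (apply sinc_bnd; assert (HP := PI_4); lra).
  assert (L1 := sinc_lo (w m k + u m) ltac:(rewrite Rabs_right; lra)).
  assert (L2 := sinc_lo (w m k - u m) ltac:(rewrite Rabs_right; lra)).
  assert (C2 := c2_pos k).
  unfold tterm. unfold Rdiv. rewrite !Rabs_mult, Rabs_inv, !Rabs_mult.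
  rewrite (Rabs_right 8), (Rabs_right (sinc (2 * u m))), (Rabs_right (sinc (w m k + u m))),
    (Rabs_right (sinc (w m k - u m))), (Rabs_right (cc k ^ 2 - 4 * t ^ 2)) by lra.
  assert (0 <= Rabs t) by apply Rabs_pos.
  rewrite !Rinv_mult.
  assert (/ sinc (w m k + u m) <= 3) by (replace 3 with (/ (1/3)) by field; apply Rinv_le_contravar; lra).
  assert (/ sinc (w m k - u m) <= 3) by (replace 3 with (/ (1/3)) by field; apply Rinv_le_contravar; lra).
  assert (0 < / sinc (w m k + u m)) by (apply Rinv_0_lt_compat; lra).
  assert (0 < / sinc (w m k - u m)) by (apply Rinv_0_lt_compat; lra).
  assert (0 < / (cc k ^ 2 - 4 * t ^ 2)) by (apply Rinv_0_lt_compat; lra).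
  set (a := / sinc (w m k + u m)) in *. set (b := / sinc (w m k - u m)) in *.
  set (d := / (cc k ^ 2 - 4 * t ^ 2)) in *. set (s := sinc (2 * u m)) in *.
  assert (a * b <= 9) by nra. assert (s * (a * b) <= 9) by nra.
  assert (0 <= Rabs t * d) by nra.
  assert (s*(a*b)*(Rabs t * d) <= 9 * (Rabs t * d)) by (apply Rmult_le_compat_r; lra).
  nra.
Qed.

Lemma sterm_bound m k : (k < 2 ^ m)%nat -> Rabs (sterm m k) <= 36 / (cc k + 2 * t) ^ 2 + 36 / (cc k - 2 * t) ^ 2.
Proof.
  intros Hk. destruct (uw_bounds m k Hk) as [H1 [H2 H3]].
  assert (L1 := sinc_lo (w m k + u m) ltac:(rewrite Rabs_right; lra)).
  assert (L2 := sinc_lo (w m k - u m) ltac:(rewrite Rabs_right; lra)).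
  assert (A0 := cc_ge k).
  assert (Ht' : - (PI/2) < t < PI/2) by (apply Rabs_def2 in Ht; lra).
  assert (P1 : 0 < (cc k + 2 * t) ^ 2) by (apply pow_lt; lra).
  assert (P2 : 0 < (cc k - 2 * t) ^ 2) by (apply pow_lt; lra).
  unfold sterm. rewrite Rabs_right.
  2:{ apply Rle_ge, Rplus_le_le_0_compat; apply Rlt_le, Rdiv_lt_0_compat; try lra;
      apply Rmult_lt_0_compat; auto; apply pow_lt; lra. }
  apply Rplus_le_compat; unfold Rdiv; rewrite Rinv_mult; 
    rewrite <- Rmult_assoc; apply Rmult_le_compat_r; try (apply Rlt_le, Rinv_0_lt_compat; lra).
  - assert (/ sinc (w m k + u m) ^ 2 <= 9).
    { replace 9 with (/ ((1/3)^2)) by field. apply Rinv_le_contravar. nra. apply pow_incr; lra. }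
    lra.
  - assert (/ sinc (w m k - u m) ^ 2 <= 9).
    { replace 9 with (/ ((1/3)^2)) by field. apply Rinv_le_contravar. nra. apply pow_incr; lra. }
    lra.
Qed.

Lemma tan_pf : infinite_sum (fun k => 8 * t / (cc k ^ 2 - 4 * t ^ 2)) (tan t).
Proof.
  assert (Ht' : - (PI/2) < t < PI/2) by (apply Rabs_def2 in Ht; lra).
  assert (HP := PI_RGT_0).
  assert (D0 : 0 < PI ^ 2 - 4 * t ^ 2) by nra.
  destruct (sum_comp (fun k => 72 * Rabs t / (cc k ^ 2 - 4 * t ^ 2)) (72 * Rabs t / (PI ^ 2 - 4 * t ^ 2))) as [SM HSM].
  { intros k. assert (C2 := c2_pos k). assert (0 <= Rabs t) by apply Rabs_pos.
    assert (Hk := pos_INR k).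
    assert (E : (PI ^ 2 - 4 * t ^ 2) * (INR k + 1) ^ 2 <= cc k ^ 2 - 4 * t ^ 2).
    { unfold cc. assert (0 <= t^2) by nra. nra. }
    split. apply Rmult_le_pos; [lra|]. apply Rlt_le, Rinv_0_lt_compat; lra.
    replace (72 * Rabs t / (PI^2 - 4*t^2) * / (INR k + 1)^2) with (72 * Rabs t * / ((PI^2-4*t^2) * (INR k+1)^2)) by (rewrite Rinv_mult; unfold Rdiv; ring).
    unfold Rdiv. apply Rmult_le_compat_l; [lra|].
    apply Rinv_le_contravar; [|lra]. apply Rmult_lt_0_compat; [lra|]. apply pow_lt; lra. }
  apply (tannery tterm _ (fun k => 72 * Rabs t / (cc k ^ 2 - 4 * t ^ 2)) (fun m => 2 ^ m)%nat (tan t) SM tterm_lim); auto.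
  - intros m k Hk. apply tterm_bound; auto.
  - intros k. assert (C2 := c2_pos k). assert (0 <= Rabs t) by apply Rabs_pos.
    apply Rmult_le_pos; [lra|]. apply Rlt_le, Rinv_0_lt_compat; lra.
  - apply L_inf.
  - apply tan_ssum.
Qed.

Lemma sec_pf : infinite_sum (fun k => 4 / (cc k + 2 * t) ^ 2 + 4 / (cc k - 2 * t) ^ 2) (/ cos t ^ 2).
Proof.
  assert (Ht' : - (PI/2) < t < PI/2) by (apply Rabs_def2 in Ht; lra).
  assert (HP := PI_RGT_0).
  assert (D0 : 0 < PI - 2 * Rabs t) by lra.
  assert (Hge : forall k, (PI - 2 * Rabs t) * (INR k + 1) <= cc k + 2 * t /\ (PI - 2 * Rabs t) * (INR k + 1) <= cc k - 2 * t).
  { intros k. assert (Hk := pos_INR k). unfold cc.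
    unfold Rabs; destruct Rcase_abs; split; nra. }
  assert (Hinv : forall k z, (PI - 2 * Rabs t) * (INR k + 1) <= z -> 36 / z ^ 2 <= 36 / (PI - 2 * Rabs t) ^ 2 * / (INR k + 1) ^ 2).
  { intros k z Hz. assert (Hk := pos_INR k). unfold Rdiv. rewrite Rmult_assoc.
    apply Rmult_le_compat_l; [lra|]. rewrite <- Rinv_mult. apply Rinv_le_contravar.
    apply Rmult_lt_0_compat; apply pow_lt; lra. rewrite <- Rpow_mult_distr. apply pow_incr. nra. }
  destruct (sum_comp (fun k => 36 / (cc k + 2 * t) ^ 2 + 36 / (cc k - 2 * t) ^ 2) (2 * (36 / (PI - 2 * Rabs t) ^ 2))) as [SM HSM].
  { intros k. destruct (Hge k) as [G1 G2]. assert (Hk := pos_INR k).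
    assert (0 < (cc k + 2 * t) ^ 2) by (apply pow_lt; nra).
    assert (0 < (cc k - 2 * t) ^ 2) by (apply pow_lt; nra).
    split. apply Rplus_le_le_0_compat; apply Rlt_le, Rdiv_lt_0_compat; lra.
    assert (A1 := Hinv k _ G1). assert (A2 := Hinv k _ G2). lra. }
  apply (tannery sterm _ (fun k => 36 / (cc k + 2 * t) ^ 2 + 36 / (cc k - 2 * t) ^ 2) (fun m => 2 ^ m)%nat (/ cos t ^ 2) SM sterm_lim); auto.
  - intros m k Hk. apply sterm_bound; auto.
  - intros k. destruct (Hge k) as [G1 G2]. assert (Hk := pos_INR k).
    assert (0 < (cc k + 2 * t) ^ 2) by (apply pow_lt; nra).
    assert (0 < (cc k - 2 * t) ^ 2) by (apply pow_lt; nra).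
    apply Rplus_le_le_0_compat; apply Rlt_le, Rdiv_lt_0_compat; lra.
  - apply L_inf.
  - apply sec_ssum.
Qed.

End PF.

Lemma isum_scal c f l : infinite_sum f l -> infinite_sum (fun n => c * f n) (c * l).
Proof. intros H. apply is_series_Reals. apply is_series_Reals in H.
  exact (is_series_scal_l c f l H). Qed.

Lemma isum_plus f g lf lg : infinite_sum f lf -> infinite_sum g lg -> infinite_sum (fun n => f n + g n) (lf + lg).
Proof. intros H1 H2. apply is_series_Reals. apply is_series_Reals in H1. apply is_series_Reals in H2.
  exact (is_series_plus f g lf lg H1 H2). Qed.

Lemma isum_minus f g lf lg : infinite_sum f lf -> infinite_sum g lg -> infinite_sum (fun n => f n - g n) (lf - lg).
Proof. intros H1 H2. apply is_series_Reals. apply is_series_Reals in H1. apply is_series_Reals in H2.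
  exact (is_series_minus f g lf lg H1 H2). Qed.

Lemma isum_ext f g l : (forall n, f n = g n) -> infinite_sum f l -> infinite_sum g l.
Proof. intros E H. apply is_series_Reals. apply is_series_Reals in H. exact (is_series_ext f g l E H). Qed.

Lemma isum_le f g lf lg : (forall n, f n <= g n) -> infinite_sum f lf -> infinite_sum g lg -> lf <= lg.
Proof.
  intros E H1 H2. apply is_lim_seq_Reals in H1. apply is_lim_seq_Reals in H2.
  assert (H := is_lim_seq_le _ _ _ _ (fun n => sum_Rle f g n (fun i _ => E i)) H1 H2). exact H.
Qed.

Lemma psum_le f l : (forall k, 0 <= f k) -> infinite_sum f l -> forall n, sum_f_R0 f n <= l.
Proof. intros H0 H n. rewrite <- ssum_sum_f. apply ssum_le_inf; auto. Qed.

Lemma isum_bound_le f l M : infinite_sum f l -> (forall n, sum_f_R0 f n <= M) -> l <= M.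
Proof.
  intros H HM. apply is_lim_seq_Reals in H.
  assert (H' := is_lim_seq_le _ _ _ _ HM H (is_lim_seq_const M)). exact H'.
Qed.

Lemma isum_comp f g l : (forall n, 0 <= f n <= g n) -> infinite_sum g l -> exists l', infinite_sum f l'.
Proof. intros H Hg. destruct (Rseries_CV_comp f g H (exist _ l Hg)) as [l' Hl]. exists l'; exact Hl. Qed.

Lemma isum_finsum (a : nat -> nat -> R) (l : nat -> R) N :
  (forall j, infinite_sum (a j) (l j)) ->
  infinite_sum (fun k => sum_f_R0 (fun j => a j k) N) (sum_f_R0 l N).
Proof.
  intros H. induction N; simpl. apply H.
  apply isum_plus; auto.
Qed.

Lemma isum_zero : infinite_sum (fun _ => 0) 0.
Proof. intros e He. exists O. intros n _. unfold Rdist. rewrite sum_cte. rewrite Rmult_0_l, Rminus_0_r, Rabs_R0. lra. Qed.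

Lemma fubini (a : nat -> nat -> R) (b : nat -> R) SS :
  (forall k n, 0 <= a k n) -> (forall k, infinite_sum (a k) (b k)) -> infinite_sum b SS ->
  exists c, (forall n, infinite_sum (fun k => a k n) (c n)) /\ infinite_sum c SS.
Proof.
  intros H0 Hb HS.
  assert (Hb0 : forall k, 0 <= b k).
  { intros k. apply (isum_le (fun _ => 0) (a k)). apply H0. apply isum_zero. apply Hb. }
  assert (Hakn : forall k n, a k n <= b k).
  { intros k n. eapply Rle_trans; [|apply (psum_le (a k) (b k) (H0 k) (Hb k) n)].
    destruct n. simpl; lra. rewrite <- ssum_sum_f. simpl. 
    assert (0 <= ssum (a k) (S n)) by (apply ssum_nonneg; auto). simpl in H. lra. }
  assert (Hex : forall n, exists l, infinite_sum (fun k => a k n) l).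
  { intros n. apply (isum_comp _ b SS); auto. }
  set (c n := Series (fun k => a k n)).
  assert (Hc : forall n, infinite_sum (fun k => a k n) (c n)).
  { intros n. unfold c. destruct (Hex n) as [l Hl]. apply is_series_Reals in Hl.
    rewrite (is_series_unique _ _ Hl). apply is_series_Reals; auto. }
  assert (Hc0 : forall n, 0 <= c n).
  { intros n. apply (isum_le (fun _ => 0) (fun k => a k n)). intros; apply H0. apply isum_zero. apply Hc. }
  assert (HcS : forall N, sum_f_R0 c N <= SS).
  { intros N. apply (isum_le (fun k => sum_f_R0 (fun j => a k j) N) b).
    intros k. apply psum_le. apply H0. apply Hb.
    apply (isum_finsum (fun j k => a k j)). apply Hc. auto. }
  destruct (ex_inf_sum_bounded c SS Hc0 HcS) as [SS' HS'].
  assert (SS' <= SS) by (apply (isum_bound_le c); auto).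
  assert (SS <= SS').
  { apply (isum_bound_le b); auto. intros K.
    assert (HK : infinite_sum (fun n => sum_f_R0 (fun k => a k n) K) (sum_f_R0 b K)).
    { apply (isum_finsum a b K). auto. }
    apply (isum_le (fun n => sum_f_R0 (fun k => a k n) K) c _ _ ); auto. intros n. apply psum_le. intros; apply H0. apply Hc. }
  exists c. split; auto. replace SS with SS' by lra. auto.
Qed.

Definition tau n := match n with O => 0 | S n => Series (fun k => 8 * 4 ^ n / cc k ^ (2 * n + 2)) end.

Lemma tau_sum n : infinite_sum (fun k => 8 * 4 ^ n / cc k ^ (2 * n + 2)) (tau (S n)).
Proof.
  assert (HP := PI_RGT_0).
  destruct (sum_comp (fun k => 8 * 4 ^ n / cc k ^ (2 * n + 2)) (8 * 4 ^ n / PI ^ (2 * n + 2))) as [l Hl].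
  { intros k. assert (Hk := pos_INR k).
    assert (Hc : (INR k + 1) * PI <= cc k) by (unfold cc; nra).
    assert (P4 : 0 < 4 ^ n) by (apply pow_lt; lra).
    assert (Pc : 0 < cc k ^ (2 * n + 2)) by (apply pow_lt; nra).
    split. apply Rlt_le, Rdiv_lt_0_compat; lra.
    assert (Hge : (INR k + 1) ^ 2 * PI ^ (2 * n + 2) <= cc k ^ (2 * n + 2)).
    { eapply Rle_trans; [|apply pow_incr; split; [|exact Hc]; nra].
      rewrite Rpow_mult_distr. apply Rmult_le_compat_r. apply pow_le; lra.
      apply Rle_pow. lra. lia. }
    replace (8 * 4 ^ n / PI ^ (2 * n + 2) * / (INR k + 1) ^ 2) with (8 * 4 ^ n / ((INR k + 1) ^ 2 * PI ^ (2 * n + 2)))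
      by (field; repeat split; try apply pow_nonzero; lra).
    unfold Rdiv. apply Rmult_le_compat_l; [lra|]. apply Rinv_le_contravar; auto.
    apply Rmult_lt_0_compat; apply pow_lt; lra. }
  change (tau (S n)) with (Series (fun k => 8 * 4 ^ n / cc k ^ (2 * n + 2))). apply is_series_Reals in Hl. rewrite (is_series_unique _ _ Hl). apply is_series_Reals; auto.
Qed.

Lemma tau_nonneg n : 0 <= tau n.
Proof.
  destruct n. simpl; lra. apply (isum_le (fun _ => 0) (fun k => 8 * 4 ^ n / cc k ^ (2 * n + 2)) 0 _ ); [| apply isum_zero | apply tau_sum].
  intros k. assert (HP := PI_RGT_0). apply Rlt_le, Rdiv_lt_0_compat. apply Rmult_lt_0_compat; [lra|apply pow_lt; lra].
  apply pow_lt. assert (H := cc_ge k). lra.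
Qed.

Lemma ttan_series t (Ht : Rabs t < PI / 2) :
  infinite_sum (fun n => tau (S n) * t ^ (2 * n + 2)) (t * tan t).
Proof.
  assert (Htan := isum_scal t _ _ (tan_pf t Ht)).
  set (a k n := 8 * 4 ^ n / cc k ^ (2 * n + 2) * t ^ (2 * n + 2)).
  assert (Ha0 : forall k n, 0 <= a k n).
  { intros k n. unfold a. apply Rmult_le_pos.
    apply Rlt_le, Rdiv_lt_0_compat. apply Rmult_lt_0_compat; [lra|apply pow_lt; lra].
    apply pow_lt. assert (H := cc_ge k). assert (HP := PI_RGT_0). lra.
    replace (2 * n + 2)%nat with (2 * (n + 1))%nat by lia. rewrite pow_mult. apply pow_le. nra. }
  assert (Hb : forall k, infinite_sum (a k) (t * (8 * t / (cc k ^ 2 - 4 * t ^ 2)))).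
  { intros k. assert (C2 := c2_pos t Ht k). assert (Hc := cc_ge k). assert (HP := PI_RGT_0).
    assert (Hq : Rabs (4 * t ^ 2 / cc k ^ 2) < 1).
    { rewrite Rabs_right. apply Rmult_lt_reg_r with (cc k ^ 2). apply pow_lt; lra.
      field_simplify; try lra. apply Rle_ge, Rmult_le_pos. nra. apply Rlt_le, Rinv_0_lt_compat, pow_lt; lra. }
    assert (G := is_series_geom _ Hq). apply is_series_Reals in G.
    assert (G2 := isum_scal (8 * t ^ 2 / cc k ^ 2) _ _ G).
    eapply isum_ext; [|replace (t * (8 * t / (cc k ^ 2 - 4 * t ^ 2))) with (8 * t ^ 2 / cc k ^ 2 * / (1 - 4 * t ^ 2 / cc k ^ 2)) by (field; lra); exact G2].
    intros n. unfold a. rewrite (pow_add (cc k)), (pow_add t), !pow_mult. unfold Rdiv.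
    rewrite !Rpow_mult_distr, pow_inv.
    field. split; try lra. apply pow_nonzero. apply pow_nonzero. lra. }
  destruct (fubini a _ _ Ha0 Hb Htan) as [c [Hc1 Hc2]].
  eapply isum_ext; [|exact Hc2]. intros n.
  apply (uniqueness_sum (fun k => a k n)). apply Hc1.
  unfold a. apply (isum_ext (fun k => t ^ (2 * n + 2) * (8 * 4 ^ n / cc k ^ (2 * n + 2)))).
  intros; ring. replace (tau (S n) * t ^ (2 * n + 2)) with (t ^ (2 * n + 2) * tau (S n)) by ring. apply isum_scal. apply tau_sum.
Qed.

Lemma F1 t (Ht : Rabs t < PI / 2) :
  infinite_sum (fun k => 64 * t ^ 3 / (cc k ^ 2 - 4 * t ^ 2) ^ 2) (t * / cos t ^ 2 - tan t).
Proof.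
  assert (H := isum_minus _ _ _ _ (isum_scal t _ _ (sec_pf t Ht)) (tan_pf t Ht)).
  eapply isum_ext; [|exact H]. intros k. simpl.
  assert (Ht' : - (PI/2) < t < PI/2) by (apply Rabs_def2 in Ht; lra).
  assert (Hc := cc_ge k). assert (C2 := c2_pos t Ht k).
  field. repeat split; lra.
Qed.

Definition ev (a : nat -> R) n := if Nat.even n then a (Nat.div2 n) else 0.
Definition od (a : nat -> R) n := if Nat.even n then 0 else a (Nat.div2 n).

Lemma ev_even a p : ev a (2 * p) = a p.
Proof. unfold ev. rewrite Nat.even_even, Nat.div2_double. auto. Qed.
Lemma ev_odd a p : ev a (2 * p + 1) = 0.
Proof. unfold ev. rewrite Nat.even_odd. auto. Qed.
Lemma od_even a p : od a (2 * p) = 0.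
Proof. unfold od. rewrite Nat.even_even. auto. Qed.
Lemma od_odd a p : od a (2 * p + 1) = a p.
Proof. unfold od. rewrite Nat.even_odd, Nat.div2_odd'. auto. Qed.

Lemma is_pseries_zero x : is_pseries (fun _ => 0) x 0.
Proof. apply is_pseries_R. apply is_series_Reals. eapply isum_ext; [|apply isum_zero]. intros; simpl; ring. Qed.

Lemma is_pseries_ev a x l : is_pseries a (x ^ 2) l -> is_pseries (ev a) x l.
Proof.
  intros H. replace l with (l + x * 0) by ring. apply is_pseries_odd_even.
  - eapply is_pseries_ext; [|exact H]. intros n. rewrite ev_even. auto.
  - eapply is_pseries_ext; [|apply is_pseries_zero]. intros n. rewrite ev_odd. auto.
Qed.

Lemma is_pseries_od a x l : is_pseries a (x ^ 2) l -> is_pseries (od a) x (x * l).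
Proof.
  intros H. replace (x * l) with (0 + x * l) by ring. apply is_pseries_odd_even.
  - eapply is_pseries_ext; [|apply is_pseries_zero]. intros n. rewrite od_even. auto.
  - eapply is_pseries_ext; [|exact H]. intros n. rewrite od_odd. auto.
Qed.

Lemma bounded_of_sum f l : infinite_sum f l -> exists M, forall n, Rabs (f n) <= M.
Proof.
  intros H. assert (H0 : is_lim_seq f 0).
  { apply ex_series_lim_0. exists l. apply is_series_Reals. auto. }
  apply is_lim_seq_Reals in H0. destruct (H0 1 Rlt_0_1) as [N HN].
  exists (ssum (fun k => Rabs (f k)) N + 1). intros n.
  assert (0 <= ssum (fun k => Rabs (f k)) N) by (apply ssum_nonneg; intros; apply Rabs_pos).
  destruct (le_lt_dec N n).
  - specialize (HN n l0). unfold R_dist in HN. rewrite Rminus_0_r in HN. lra.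
  - assert (forall N', (n < N')%nat -> Rabs (f n) <= ssum (fun k => Rabs (f k)) N').
    { induction N'; intros Hn. lia. simpl. destruct (Nat.eq_dec n N').
      subst. assert (0 <= ssum (fun k => Rabs (f k)) N') by (apply ssum_nonneg; intros; apply Rabs_pos). lra.
      specialize (IHN' ltac:(lia)). assert (0 <= Rabs (f N')) by apply Rabs_pos. lra. }
    specialize (H2 N l0). lra.
Qed.

Lemma rad_ge a r l : is_pseries a r l -> Rbar_le (Rabs r) (CV_radius a).
Proof.
  intros H. apply (proj1 (CV_radius_bounded a)).
  apply is_pseries_R in H. apply is_series_Reals in H.
  destruct (bounded_of_sum _ _ H) as [M HM]. exists M. intros n.
  rewrite Rabs_mult. rewrite (Rabs_right (Rabs r ^ n)) by (apply Rle_ge, pow_le, Rabs_pos). rewrite RPow_abs, <- Rabs_mult. apply HM.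
Qed.

Lemma rad_lt a r l y : is_pseries a r l -> Rabs y < Rabs r -> Rbar_lt (Rabs y) (CV_radius a).
Proof.
  intros H Hy. apply rad_ge in H. destruct (CV_radius a); simpl in *; auto. lra.
Qed.


Lemma unit_series (m : nat) (c : R) : infinite_sum (fun n => if Nat.eqb n m then c else 0) c.
Proof.
  intros e He. exists m. intros n Hn.
  assert (forall N, sum_f_R0 (fun n => if Nat.eqb n m then c else 0) N = if Nat.leb m N then c else 0).
  { induction N. simpl. destruct m; simpl; auto. cbn [sum_f_R0].
    rewrite IHN. destruct (Nat.eq_dec (S N) m).
    - subst. rewrite Nat.eqb_refl. replace (Nat.leb (S N) N) with false by (symmetry; apply Nat.leb_gt; lia).
      replace (Nat.leb (S N) (S N)) with true by (symmetry; apply Nat.leb_le; lia). ring.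
    - rewrite (proj2 (Nat.eqb_neq _ _) n0). destruct (le_lt_dec m N).
      + replace (Nat.leb m N) with true by (symmetry; apply Nat.leb_le; lia).
        replace (Nat.leb m (S N)) with true by (symmetry; apply Nat.leb_le; lia). ring.
      + replace (Nat.leb m N) with false by (symmetry; apply Nat.leb_gt; lia).
        replace (Nat.leb m (S N)) with false by (symmetry; apply Nat.leb_gt; lia). ring. }
  rewrite H. replace (Nat.leb m n) with true by (symmetry; apply Nat.leb_le; lia).
  unfold Rdist. rewrite Rminus_diag, Rabs_R0. lra.
Qed.

Lemma exp_plus_pow y n : exp y ^ n = exp (INR n * y).
Proof. induction n. simpl. rewrite Rmult_0_l, exp_0. auto. rewrite S_INR. simpl. rewrite IHn, <- exp_plus. f_equal. ring. Qed.

Section Bern.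
Variable B : nat -> R.
Hypothesis HB : is_bernoulli B.

Lemma B_series c y : 0 < Rabs (c * y) < 2 * PI ->
  infinite_sum (fun n => B n * c ^ n / INR (fact n) * y ^ n) ((c * y) / (exp (c * y) - 1)).
Proof.
  intros H. eapply isum_ext; [|apply HB; auto]. intros n. simpl. rewrite Rpow_mult_distr. field.
  apply INR_fact_neq_0.
Qed.

Definition hco n := B n * (4 ^ n - 2 ^ n) / INR (fact n) + (if Nat.eqb n 1 then 1 else 0).
Definition Hf y := y - 2 * y / (exp (2 * y) - 1) + 4 * y / (exp (4 * y) - 1).

Lemma h_pseries y : 0 < Rabs y < PI / 2 -> is_pseries hco y (Hf y).
Proof.
  intros Hy. apply is_pseries_R, is_series_Reals.
  assert (H2 := B_series 2 y ltac:(rewrite Rabs_mult, Rabs_right by lra; lra)).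
  assert (H4 := B_series 4 y ltac:(rewrite Rabs_mult, Rabs_right by lra; lra)).
  assert (H1 : infinite_sum (fun n => (if Nat.eqb n 1 then 1 else 0) * y ^ n) y).
  { eapply isum_ext; [|apply (unit_series 1 y)]. intros n. cbv beta. destruct (Nat.eqb n 1) eqn:E; [apply Nat.eqb_eq in E; subst; simpl; ring| ring]. }
  assert (H := isum_plus _ _ _ _ (isum_minus _ _ _ _ H1 H2) H4).
  unfold Hf. eapply isum_ext; [|exact H]. intros n. unfold hco. simpl. field. apply INR_fact_neq_0.
Qed.

Definition e_co n := / INR (fact n) + (-1) ^ n / INR (fact n).
Definition f_co := PS_incr_1 (fun n => / INR (fact n) - (-1) ^ n / INR (fact n)).

Lemma exp_pseries_neg y : infinite_sum (fun n => (-1) ^ n / INR (fact n) * y ^ n) (exp (- y)).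
Proof.
  assert (H := is_exp_Reals (- y)). apply is_pseries_R, is_series_Reals in H.
  eapply isum_ext; [|exact H]. intros n. replace (- y) with (-1 * y) by ring. rewrite Rpow_mult_distr.
  field. apply INR_fact_neq_0.
Qed.

Lemma exp_pseries y : infinite_sum (fun n => / INR (fact n) * y ^ n) (exp y).
Proof. assert (H := is_exp_Reals y). apply is_pseries_R, is_series_Reals in H. exact H. Qed.

Lemma e_pseries y : is_pseries e_co y (exp y + exp (- y)).
Proof.
  apply is_pseries_R, is_series_Reals.
  eapply isum_ext; [|exact (isum_plus _ _ _ _ (exp_pseries y) (exp_pseries_neg y))].
  intros n. unfold e_co. ring.
Qed.

Lemma f_pseries y : is_pseries f_co y (y * (exp y - exp (- y))).
Proof.
  apply (is_pseries_incr_1 (fun n => / INR (fact n) - (-1) ^ n / INR (fact n)) y (exp y - exp (-y))).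
  apply is_pseries_R, is_series_Reals.
  eapply isum_ext; [|exact (isum_minus _ _ _ _ (exp_pseries y) (exp_pseries_neg y))].
  intros n. cbv beta. ring.
Qed.

Lemma Hf_identity y : y <> 0 -> Hf y * (exp y + exp (- y)) = y * (exp y - exp (- y)).
Proof.
  intros Hy. unfold Hf.
  assert (E2 : exp (2 * y) = exp y ^ 2) by (rewrite exp_plus_pow; f_equal; simpl; ring).
  assert (E4 : exp (4 * y) = exp y ^ 4) by (rewrite exp_plus_pow; f_equal; simpl; ring).
  rewrite E2, E4, exp_Ropp.
  assert (P := exp_pos y). set (E := exp y) in *.
  assert (N1 : E <> 1). { intro H. apply Hy. rewrite <- (ln_exp y). fold E. rewrite H. apply ln_1. }
  assert (N2 : E ^ 2 - 1 <> 0). { intro H. apply N1. nra. }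
  assert (N4 : E ^ 4 - 1 <> 0). { intro H. apply N2. replace (E^4 - 1) with ((E^2-1)*(E^2+1)) in H by ring.
     apply Rmult_integral in H. destruct H; auto. nra. }
  field. repeat split; auto; lra.
Qed.

Lemma ball0 (e : posreal) x : ball 0 e x -> Rabs x < e.
Proof. intros H. change (Rabs (x + - 0) < e) in H. rewrite Ropp_0, Rplus_0_r in H. exact H. Qed.

Lemma h_rad y : Rabs y < 1 -> Rbar_lt (Rabs y) (CV_radius hco).
Proof.
  intros Hy. assert (HP := PI2_1).
  apply (rad_lt _ 1 (Hf 1)). apply h_pseries. rewrite Rabs_R1; lra. rewrite Rabs_R1; lra.
Qed.

Lemma e_rad y : Rabs y < 1 -> Rbar_lt (Rabs y) (CV_radius e_co).
Proof. intros Hy. apply (rad_lt _ 1 (exp 1 + exp (-1))). apply e_pseries. rewrite Rabs_R1; lra. Qed.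

Lemma E1 n : PS_mult hco e_co n = f_co n.
Proof.
  assert (HP := PI2_1).
  apply PSeries_ext_recip.
  - assert (H := is_pseries_mult _ _ (1/2) _ _ (h_pseries (1/2) ltac:(rewrite Rabs_right; lra))
        (e_pseries (1/2)) (h_rad (1/2) ltac:(rewrite Rabs_right; lra)) (e_rad (1/2) ltac:(rewrite Rabs_right; lra))).
    apply rad_ge in H. eapply Rbar_lt_le_trans; [|exact H]. simpl. rewrite Rabs_right; lra.
  - assert (H := rad_ge _ _ _ (f_pseries 1)). eapply Rbar_lt_le_trans; [|exact H]. simpl. rewrite Rabs_R1; lra.
  - exists (mkposreal (1/2) ltac:(lra)). intros x Hx. apply ball0 in Hx. simpl in Hx.
    destruct (Req_EM_T x 0).
    + subst. rewrite !PSeries_0. unfold PS_mult, f_co, PS_incr_1, hco, e_co. simpl. change (zero : R) with 0. field.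
    + rewrite PSeries_mult by (apply h_rad || apply e_rad; lra).
      assert (A1 : 0 < Rabs x < PI / 2) by (split; [apply Rabs_pos_lt; auto | lra]).
      rewrite (is_pseries_unique _ _ _ (h_pseries x A1)), (is_pseries_unique _ _ _ (e_pseries x)),
        (is_pseries_unique _ _ _ (f_pseries x)).
      apply Hf_identity; auto.
Qed.

End Bern.

Definition g_co := ev tau.
Definition cs_co := ev cos_n.
Definition sn_co := PS_incr_1 (od sin_n).

Lemma g_pseries t : Rabs t < PI / 2 -> is_pseries g_co t (t * tan t).
Proof.
  intros Ht. apply is_pseries_ev. apply is_pseries_R.
  apply is_series_decr_1.
  match goal with |- is_series _ ?L => replace L with (t * tan t) end.
  2:{ change (t * tan t = t * tan t + - (0 * (t ^ 2) ^ 0)). ring. }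
  apply is_series_Reals. eapply isum_ext; [|apply ttan_series; auto].
  intros n. cbv beta. rewrite <- pow_mult. f_equal. f_equal. lia.
Qed.

Lemma cs_pseries t : is_pseries cs_co t (cos t).
Proof.
  unfold cos. destruct (exist_cos (Rsqr t)) as [l Hl]. apply is_pseries_ev.
  apply is_pseries_R, is_series_Reals. rewrite <- Rsqr_pow2. exact Hl.
Qed.

Lemma sn_pseries t : is_pseries sn_co t (t * sin t).
Proof.
  unfold sin. destruct (exist_sin (Rsqr t)) as [l Hl].
  apply (is_pseries_incr_1 (od sin_n) t (t * l)). apply is_pseries_od.
  apply is_pseries_R, is_series_Reals. rewrite <- Rsqr_pow2. exact Hl.
Qed.

Lemma T1 n : PS_mult g_co cs_co n = sn_co n.
Proof.
  assert (HP := PI2_1).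
  assert (g_rad : forall y, Rabs y < 1 -> Rbar_lt (Rabs y) (CV_radius g_co)).
  { intros y Hy. apply (rad_lt _ 1 (1 * tan 1)). apply g_pseries. rewrite Rabs_R1; lra. rewrite Rabs_R1; lra. }
  assert (c_rad : forall y, Rabs y < 1 -> Rbar_lt (Rabs y) (CV_radius cs_co)).
  { intros y Hy. apply (rad_lt _ 1 (cos 1)). apply cs_pseries. rewrite Rabs_R1; lra. }
  apply PSeries_ext_recip.
  - assert (H := is_pseries_mult _ _ (1/2) _ _ (g_pseries (1/2) ltac:(rewrite Rabs_right; lra))
        (cs_pseries (1/2)) (g_rad (1/2) ltac:(rewrite Rabs_right; lra)) (c_rad (1/2) ltac:(rewrite Rabs_right; lra))).
    apply rad_ge in H. eapply Rbar_lt_le_trans; [|exact H]. simpl. rewrite Rabs_right; lra.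
  - assert (H := rad_ge _ _ _ (sn_pseries 1)). eapply Rbar_lt_le_trans; [|exact H]. simpl. rewrite Rabs_R1; lra.
  - exists (mkposreal (1/2) ltac:(lra)). intros x Hx. apply ball0 in Hx. simpl in Hx.
    rewrite PSeries_mult by (apply g_rad || apply c_rad; lra).
    rewrite (is_pseries_unique _ _ _ (g_pseries x ltac:(lra))), (is_pseries_unique _ _ _ (cs_pseries x)),
        (is_pseries_unique _ _ _ (sn_pseries x)).
    unfold tan. assert (cos x <> 0). { apply Rgt_not_eq, cos_gt_0. apply Rabs_def2 in Hx; lra. apply Rabs_def2 in Hx; lra. }
    field. auto.
Qed.

Definition om n := (-1) ^ (Nat.div2 n).

Lemma om_even p : om (2 * p) = (-1) ^ p.
Proof. unfold om. rewrite Nat.div2_double. auto. Qed.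

Lemma mult_unique (h k e : nat -> R) : e O <> 0 ->
  (forall n, PS_mult h e n = PS_mult k e n) -> forall n, h n = k n.
Proof.
  intros He H.
  assert (forall n i, (i <= n)%nat -> h i = k i).
  { induction n; intros i Hi.
    - replace i with O by lia. specialize (H O). unfold PS_mult in H. simpl in H.
      apply Rmult_eq_reg_r with (e O); auto.
    - destruct (Nat.eq_dec i (S n)); [|apply IHn; lia]. subst.
      specialize (H (S n)). unfold PS_mult in H. rewrite !tech5 in H.
      rewrite Nat.sub_diag in H.
      rewrite (sum_eq (fun k0 => h k0 * e (S n - k0)%nat) (fun k0 => k k0 * e (S n - k0)%nat)) in H.
      apply Rmult_eq_reg_r with (e O); auto. lra.
      intros j Hj. rewrite IHn; auto. }
  intros n. apply (H0 n). lia.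
Qed.

Lemma comb (g c s h e f : nat -> R) :
  (forall n, PS_mult g c n = s n) -> (forall n, PS_mult h e n = f n) ->
  (forall j, e j = 2 * om j * c j) -> (forall n, f n = -2 * om n * s n) ->
  (forall p, g (2 * p + 1)%nat = 0) -> (forall p, c (2 * p + 1)%nat = 0) -> e O <> 0 ->
  forall n, h n = - om n * g n.
Proof.
  intros T1 E1 He Hf Hg Hc He0.
  apply (mult_unique h (fun n => - om n * g n) e He0). intros n.
  rewrite E1, Hf, <- T1. unfold PS_mult.
  rewrite scal_sum. apply sum_eq. intros i Hi.
  rewrite He.
  destruct (Nat.Even_or_Odd i) as [[p Hp]|[p Hp]]; subst i.
  - destruct (Nat.Even_or_Odd (n - 2 * p)) as [[q Hq]|[q Hq]]; rewrite Hq.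
    + replace (om n) with (om (2 * (p + q))) by (f_equal; lia).
      rewrite !om_even, pow_add. ring.
    + rewrite Hc. ring.
  - rewrite Hg. ring.
Qed.

Section Br.
Variable B : nat -> R.
Hypothesis HB : is_bernoulli B.

Lemma pm1_sq p : (-1) ^ p * (-1) ^ p = 1.
Proof. rewrite <- pow_add. replace (p + p)%nat with (2 * p)%nat by lia. apply pow_1_even. Qed.

Lemma pm1_odd p : (-1) ^ (2 * p + 1) = -1.
Proof. replace (2 * p + 1)%nat with (S (2 * p)) by lia. apply pow_1_odd. Qed.

Lemma h_formula : forall n, hco B n = - om n * g_co n.
Proof.
  apply (comb g_co cs_co sn_co (hco B) e_co f_co T1 (E1 B HB)).
  - intros j. destruct (Nat.Even_or_Odd j) as [[p Hp]|[p Hp]]; subst j.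
    + unfold e_co, cs_co. rewrite ev_even, om_even. unfold cos_n.
      rewrite pow_1_even. transitivity (2 * ((-1)^p * (-1)^p) / INR (fact (2*p))).
      rewrite pm1_sq. field; apply INR_fact_neq_0. field; apply INR_fact_neq_0.
    + unfold e_co, cs_co. rewrite ev_odd, pm1_odd. field. apply INR_fact_neq_0.
  - intros m. destruct m. unfold f_co, sn_co, PS_incr_1. change (zero : R) with 0. ring.
    unfold f_co, sn_co, PS_incr_1.
    destruct (Nat.Even_or_Odd m) as [[p Hp]|[p Hp]]; subst m.
    + rewrite od_even, pow_1_even. field. apply INR_fact_neq_0.
    + rewrite od_odd, pm1_odd. replace (S (2 * p + 1)) with (2 * (p + 1))%nat by lia.
      rewrite om_even. unfold sin_n. rewrite pow_add.
      transitivity (2 * ((-1)^p * (-1)^p) / INR (fact (2*p+1))).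
      rewrite pm1_sq. field; apply INR_fact_neq_0. simpl. field; apply INR_fact_neq_0.
  - intros p. unfold g_co. apply ev_odd.
  - intros p. unfold cs_co. apply ev_odd.
  - unfold e_co. simpl. lra.
Qed.

Lemma bridge p : (1 <= p)%nat ->
  2 ^ (2 * p) * (2 ^ (2 * p) - 1) * Rabs (B (2 * p)) / INR (fact (2 * p)) = tau p.
Proof.
  intros Hp. assert (H := h_formula (2 * p)).
  unfold hco, g_co in H. rewrite ev_even, om_even in H.
  replace (Nat.eqb (2 * p) 1) with false in H by (symmetry; apply Nat.eqb_neq; lia).
  rewrite Rplus_0_r in H.
  assert (Hf : 0 < INR (fact (2 * p))) by (apply INR_fact_lt_0).
  assert (H4 : 4 ^ (2 * p) = 2 ^ (2 * p) * 2 ^ (2 * p)) by (rewrite <- Rpow_mult_distr; f_equal; ring).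
  assert (H1 : 1 <= 2 ^ (2 * p)) by (apply pow_R1_Rle; lra).
  assert (E : 2 ^ (2 * p) * (2 ^ (2 * p) - 1) * Rabs (B (2 * p)) / INR (fact (2 * p)) =
              Rabs (B (2 * p) * (4 ^ (2 * p) - 2 ^ (2 * p)) / INR (fact (2 * p)))).
  { unfold Rdiv. rewrite !Rabs_mult, Rabs_inv, (Rabs_right (INR _)) by lra.
    rewrite (Rabs_right (4 ^ (2 * p) - 2 ^ (2 * p))) by (rewrite H4; nra). rewrite H4. ring. }
  rewrite E, H. rewrite Rabs_mult, Rabs_Ropp, pow_1_abs, Rmult_1_l.
  apply Rabs_right, Rle_ge, tau_nonneg.
Qed.

End Br.

Lemma fold_app (l1 l2 : list R) : fold_right Rplus 0 (l1 ++ l2) = fold_right Rplus 0 l1 + fold_right Rplus 0 l2.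
Proof. induction l1; simpl. ring. rewrite IHl1. ring. Qed.

Definition Rn t d n := INR n * 2 ^ (2 * n + 4) * t ^ (2 * n + 1) / PI ^ (2 * n) * / (d ^ (2 * n) * (PI ^ 2 * d ^ 2 - 4 * t ^ 2))
     + 2 ^ (2 * n + 6) * t ^ (2 * n + 3) / PI ^ (2 * n) * / (d ^ (2 * n) * (PI ^ 2 * d ^ 2 - 4 * t ^ 2) ^ 2).
Definition tm t d j := 2 * INR j * t ^ (2 * j + 1) * (8 * 4 ^ j / (d * PI) ^ (2 * j + 2)).

Lemma step t d n : 0 < d -> 0 < PI ^ 2 * d ^ 2 - 4 * t ^ 2 -> tm t d n + Rn t d (S n) = Rn t d n.
Proof.
  intros Hd HD. assert (HP := PI_RGT_0). unfold tm, Rn.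
  replace (S n) with (n + 1)%nat by lia. rewrite plus_INR. simpl (INR 1).
  assert (E1 : t ^ (2 * n + 1) = t ^ (2 * n) * t) by (rewrite pow_add; ring).
  assert (E2 : t ^ (2 * (n + 1) + 1) = t ^ (2 * n) * t ^ 3) by (replace (2 * (n + 1) + 1)%nat with (2 * n + 3)%nat by lia; rewrite pow_add; ring).
  assert (E3 : t ^ (2 * (n + 1) + 3) = t ^ (2 * n) * t ^ 5) by (replace (2 * (n + 1) + 3)%nat with (2 * n + 5)%nat by lia; rewrite pow_add; ring).
  assert (E4 : t ^ (2 * n + 3) = t ^ (2 * n) * t ^ 3) by (rewrite pow_add; ring).
  assert (F1 : 2 ^ (2 * n + 4) = 2 ^ (2 * n) * 16) by (rewrite pow_add; ring).
  assert (F2 : 2 ^ (2 * (n + 1) + 4) = 2 ^ (2 * n) * 64) by (replace (2 * (n + 1) + 4)%nat with (2 * n + 6)%nat by lia; rewrite pow_add; ring).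
  assert (F3 : 2 ^ (2 * n + 6) = 2 ^ (2 * n) * 64) by (rewrite pow_add; ring).
  assert (F4 : 2 ^ (2 * (n + 1) + 6) = 2 ^ (2 * n) * 256) by (replace (2 * (n + 1) + 6)%nat with (2 * n + 8)%nat by lia; rewrite pow_add; ring).
  assert (G1 : PI ^ (2 * (n + 1)) = PI ^ (2 * n) * PI ^ 2) by (replace (2 * (n + 1))%nat with (2 * n + 2)%nat by lia; rewrite pow_add; ring).
  assert (G2 : d ^ (2 * (n + 1)) = d ^ (2 * n) * d ^ 2) by (replace (2 * (n + 1))%nat with (2 * n + 2)%nat by lia; rewrite pow_add; ring).
  assert (G3 : 4 ^ n = 2 ^ (2 * n)) by (rewrite pow_mult; f_equal; ring).
  assert (G4 : (d * PI) ^ (2 * n + 2) = d ^ (2 * n) * PI ^ (2 * n) * d ^ 2 * PI ^ 2) by (rewrite pow_add, Rpow_mult_distr; ring).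
  rewrite E1, E2, E3, E4, F1, F2, F3, F4, G1, G2, G3, G4.
  assert (X2 : 2 ^ (2 * n) <> 0) by (apply pow_nonzero; lra).
  assert (Xp : PI ^ (2 * n) <> 0) by (apply pow_nonzero; lra).
  assert (Xd : d ^ (2 * n) <> 0) by (apply pow_nonzero; lra).
  generalize dependent (2 ^ (2 * n)); generalize dependent (PI ^ (2 * n)); generalize dependent (d ^ (2 * n)); generalize dependent (t ^ (2 * n)).
  intros. field. repeat split; try lra.
Qed.

Lemma perk (t d : R) (N : nat) : 0 < d -> 0 < PI ^ 2 * d ^ 2 - 4 * t ^ 2 -> (1 <= N)%nat ->
  fold_right Rplus 0 (map (tm t d) (seq 1 (N - 1))) + Rn t d N
  = 64 * t ^ 3 / ((d * PI) ^ 2 - 4 * t ^ 2) ^ 2.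
Proof.
  intros Hd HD HN. assert (HP := PI_RGT_0).
  destruct N as [|M]; [lia|]. replace (S M - 1)%nat with M by lia. clear HN.
  induction M.
  - simpl seq. simpl map. simpl fold_right. unfold Rn. simpl. field. repeat split; try lra.
  - rewrite <- IHM. rewrite seq_S, map_app, fold_app. cbn [fold_right map].
    rewrite Rplus_0_r, Rplus_assoc. f_equal.
    replace (1 + M)%nat with (S M) by lia. apply step; auto.
Qed.

Lemma isum_fold (F : nat -> nat -> R) (v : nat -> R) l :
  (forall j, infinite_sum (fun k => F j k) (v j)) ->
  infinite_sum (fun k => fold_right Rplus 0 (map (fun j => F j k) l)) (fold_right Rplus 0 (map v l)).
Proof.
  intros H. induction l; simpl. apply isum_zero. apply isum_plus; auto.
Qed.

Theorem mainTheorem12 (B : nat -> R) (HB : is_bernoulli B) (N : nat) (HN : (1 <= N)%nat)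
  (t : R) (Ht : Rabs t < PI / 2) :
  exists S1 S2 : R,
    infinite_sum (fun k => / ((2 * INR (k + 1) - 1) ^ (2 * N)
                   * (PI ^ 2 * (2 * INR (k + 1) - 1) ^ 2 - 4 * t ^ 2))) S1 /\
    infinite_sum (fun k => / ((2 * INR (k + 1) - 1) ^ (2 * N)
                   * (PI ^ 2 * (2 * INR (k + 1) - 1) ^ 2 - 4 * t ^ 2) ^ 2)) S2 /\
    t * / (cos t) ^ 2 - tan t =
      sum_1_to (N - 1) (fun j =>
        2 * INR j * 2 ^ (2 * j + 2) * (2 ^ (2 * j + 2) - 1) * Rabs (B (2 * j + 2)%nat)
          / INR (fact (2 * j + 2)) * t ^ (2 * j + 1))
      + (INR N * 2 ^ (2 * N + 4) * t ^ (2 * N + 1) / PI ^ (2 * N) * S1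
         + 2 ^ (2 * N + 6) * t ^ (2 * N + 3) / PI ^ (2 * N) * S2).
Proof.
  assert (HP := PI_RGT_0).
  assert (Ht' : - (PI/2) < t < PI/2) by (apply Rabs_def2 in Ht; lra).
  assert (D0 : 0 < PI ^ 2 - 4 * t ^ 2) by nra.
  set (d k := 2 * INR (k + 1) - 1).
  assert (Hd : forall k, d k = 2 * INR k + 1) by (intros k; unfold d; rewrite plus_INR; simpl; ring).
  assert (Hd1 : forall k, INR k + 1 <= d k) by (intros k; rewrite Hd; assert (H := pos_INR k); lra).
  assert (Hcc : forall k, cc k = d k * PI) by (intros k; rewrite Hd; unfold cc; ring).
  assert (HPk : forall k, (PI ^ 2 - 4 * t ^ 2) * (INR k + 1) ^ 2 <= PI ^ 2 * d k ^ 2 - 4 * t ^ 2).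
  { intros k. assert (H1 := Hd1 k). assert (H := pos_INR k).
    assert ((INR k + 1) ^ 2 <= d k ^ 2) by (apply pow_incr; lra).
    assert (1 <= (INR k + 1) ^ 2) by nra. nra. }
  assert (HPk0 : forall k, 0 < PI ^ 2 * d k ^ 2 - 4 * t ^ 2).
  { intros k. specialize (HPk k). assert (H := pos_INR k). nra. }
  assert (HdN : forall k, 1 <= d k ^ (2 * N)) by (intros k; apply pow_R1_Rle; specialize (Hd1 k); assert (H := pos_INR k); lra).
  destruct (sum_comp (fun k => / (d k ^ (2 * N) * (PI ^ 2 * d k ^ 2 - 4 * t ^ 2))) (/ (PI ^ 2 - 4 * t ^ 2))) as [S1 HS1].
  { intros k. specialize (HPk k). specialize (HPk0 k). specialize (HdN k). assert (H := pos_INR k).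
    split. apply Rlt_le, Rinv_0_lt_compat. nra.
    rewrite <- Rinv_mult. apply Rinv_le_contravar. apply Rmult_lt_0_compat; [lra|apply pow_lt; lra]. nra. }
  destruct (sum_comp (fun k => / (d k ^ (2 * N) * (PI ^ 2 * d k ^ 2 - 4 * t ^ 2) ^ 2)) (/ (PI ^ 2 - 4 * t ^ 2) ^ 2)) as [S2 HS2].
  { intros k. specialize (HPk k). specialize (HPk0 k). specialize (HdN k). assert (H := pos_INR k).
    assert (0 < (PI ^ 2 * d k ^ 2 - 4 * t ^ 2) ^ 2) by (apply pow_lt; lra).
    split. apply Rlt_le, Rinv_0_lt_compat. nra.
    rewrite <- Rinv_mult. apply Rinv_le_contravar. apply Rmult_lt_0_compat; apply pow_lt; lra.
    assert (1 <= (INR k + 1) ^ 2) by nra.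
    assert (((PI ^ 2 - 4 * t ^ 2) * (INR k + 1) ^ 2) ^ 2 <= (PI ^ 2 * d k ^ 2 - 4 * t ^ 2) ^ 2)
      by (apply pow_incr; split; [|exact HPk]; nra).
    assert ((PI ^ 2 - 4 * t ^ 2) ^ 2 * (INR k + 1) ^ 2 <= ((PI ^ 2 - 4 * t ^ 2) * (INR k + 1) ^ 2) ^ 2).
    { rewrite Rpow_mult_distr. apply Rmult_le_compat_l. nra. nra. }
    nra. }
  exists S1, S2. split; [exact HS1|]. split; [exact HS2|].
  set (A := INR N * 2 ^ (2 * N + 4) * t ^ (2 * N + 1) / PI ^ (2 * N)).
  set (C := 2 ^ (2 * N + 6) * t ^ (2 * N + 3) / PI ^ (2 * N)).
  assert (Hfin : forall j, infinite_sum (fun k => tm t (d k) j)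
       (2 * INR j * 2 ^ (2 * j + 2) * (2 ^ (2 * j + 2) - 1) * Rabs (B (2 * j + 2)%nat)
          / INR (fact (2 * j + 2)) * t ^ (2 * j + 1))).
  { intros j. assert (Hb := bridge B HB (S j) ltac:(lia)).
    replace (2 * S j)%nat with (2 * j + 2)%nat in Hb by lia.
    replace (2 * INR j * 2 ^ (2 * j + 2) * (2 ^ (2 * j + 2) - 1) * Rabs (B (2 * j + 2)%nat)
          / INR (fact (2 * j + 2)) * t ^ (2 * j + 1))
      with ((2 * INR j * t ^ (2 * j + 1)) * (2 ^ (2 * j + 2) * (2 ^ (2 * j + 2) - 1) * Rabs (B (2 * j + 2)%nat)
          / INR (fact (2 * j + 2)))) by (field; apply INR_fact_neq_0).
    rewrite Hb. eapply isum_ext; [|apply isum_scal; apply tau_sum].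
    intros k. unfold tm. rewrite Hcc. ring. }
  assert (Hsum := isum_plus _ _ _ _ (isum_fold _ _ (seq 1 (N - 1)) Hfin)
              (isum_plus _ _ _ _ (isum_scal A _ _ HS1) (isum_scal C _ _ HS2))).
  unfold sum_1_to.
  apply (uniqueness_sum (fun k => 64 * t ^ 3 / (cc k ^ 2 - 4 * t ^ 2) ^ 2)).
  - apply F1; auto.
  - eapply isum_ext; [|exact Hsum]. intros k. cbv beta.
    rewrite Hcc. rewrite <- (perk t (d k) N); auto.
    specialize (Hd1 k). assert (H := pos_INR k). lra.
Qed.
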